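(* Let $G$ be a hypo-efficient domination graph. Then $|V(G)|\leq\gamma(G)(\Delta(G)+1)-1$. Moreover: (i) Suppose $|V(G)|=\gamma(G)(\Delta(G)+1)-1$. Then (a) for every $\gamma$-set $D$ of $G$ there is exactly one vertex $y_D\in V(G)\setminus D$ such that $D$ is an efficient dominating set of $G-y_D$, and $y_D$ is adjacent to exactly $2$ vertices of $D$; and (b) every vertex belonging to some $\gamma$-set of $G$ has degree $\Delta(G)$. In particular, if every vertex of $G$ belongs to some $\gamma$-set of $G$, then $G$ is regular. (ii) If there exist a $\gamma$-set $D$ of $G$ and a vertex $y\in V(G)\setminus D$ such that $D$ is an efficient dominating set of $G-y$, $y$ is adjacent to exactly $2$ vertices of $D$, and every vertex of $D$ has degree $\Delta(G)$, then $|V(G)|=\gamma(G)(\Delta(G)+1)-1$.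
   Context: All graphs are finite, simple and undirected. For $v\in V(G)$, $N[v]$ is the closed neighborhood of $v$. A set $D\subseteq V(G)$ is dominating if every vertex of $G$ not in $D$ has a neighbor in $D$; $\gamma(G)$ is the minimum size of a dominating set, and a dominating set of size $\gamma(G)$ is a $\gamma$-set. A set $D\subseteq V(H)$ is an efficient dominating set (EDS) of a graph $H$ if $|N_H[v]\cap D|=1$ for every $v\in V(H)$. $G$ is a hypo-efficient domination graph if $G$ has no EDS but $G-v$ has at least one EDS for every $v\in V(G)$. $\Delta(G)$ is the maximum degree. *)

(* Defs.v *)
(* A finite simple graph is a symmetric irreflexive
   relation e on a finType T; V(G) = T. *)
From mathcomp Require Import all_boot all_order.
Set Implicit Arguments. Unset Strict Implicit. Unset Printing Implicit Defensive.

Section Graph.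
Variables (T : finType) (e : rel T).

Definition nbhd (v : T) : {set T} := [set u | e v u].
Definition cnbhd (v : T) : {set T} := v |: nbhd v.
Definition deg (v : T) : nat := #|nbhd v|.
Definition maxdeg : nat := \max_(v : T) deg v.
Definition regular : Prop := forall u v : T, deg u = deg v.

Definition dominating (D : {set T}) : Prop :=
  forall v : T, v \notin D -> exists2 u, u \in D & e v u.
Definition dominatingb (D : {set T}) : bool :=
  [forall v, (v \notin D) ==> [exists u, (u \in D) && e v u]].
(* gamma(G): minimum size of a dominating set (setT is dominating) *)
Definition gamma : nat :=
  #|[arg min_(D < [set: T] | dominatingb D) #|D|]|.
Definition gamma_set (D : {set T}) : Prop := dominating D /\ #|D| = gamma.

Definition eds (D : {set T}) : Prop := forall v : T, #|cnbhd v :&: D| = 1.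
(* efficient dominating set of G - y : D is a set of vertices of G - y and
   every vertex u <> y satisfies |N_{G-y}[u] ∩ D| = 1
   (N_{G-y}[u] = N[u] \ {y}, and y \notin D). *)
Definition eds_del (y : T) (D : {set T}) : Prop :=
  y \notin D /\ forall u : T, u != y -> #|(cnbhd u :\ y) :&: D| = 1.

Definition hypo_efficient : Prop :=
  (~ exists D, eds D) /\ (forall v : T, exists D, eds_del v D).
End Graph.

(* Main.v *)
Require Import Defs.
From mathcomp Require Import all_boot all_order zify.
Set Implicit Arguments. Unset Strict Implicit. Unset Printing Implicit Defensive.

Section S.
Variables (T : finType) (e : rel T).
Hypotheses (e_sym : symmetric e) (e_irr : irreflexive e).

Lemma card_cnbhd v : #|cnbhd e v| = (deg e v).+1.
Proof. by rewrite /cnbhd cardsU1 /deg /nbhd inE e_irr. Qed.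

Lemma deg_le v : deg e v <= maxdeg e.
Proof. by rewrite /maxdeg (bigD1 v) //= leq_maxl. Qed.

Lemma dc (D : {set T}) :
  \sum_v #|cnbhd e v :&: D| = \sum_(d in D) (deg e d).+1.
Proof.
transitivity (\sum_v \sum_(d in D) ((v \in cnbhd e d) : nat)).
  apply: eq_bigr => v _; rewrite -sum1_card big_mkcond [RHS]big_mkcond.
  apply: eq_bigr => d _; rewrite /cnbhd /nbhd !inE (eq_sym d v) (e_sym v d).
  by case: (d \in D); case: (_ || _).
rewrite exchange_big; apply: eq_bigr => d _.
rewrite -card_cnbhd -sum1_card [RHS]big_mkcond; apply: eq_bigr => v _.
by case: (v \in _).
Qed.

Lemma dom_ge1 (D : {set T}) v : dominating e D -> 0 < #|cnbhd e v :&: D|.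
Proof.
move=> hD; apply/card_gt0P.
case vD: (v \in D).
  by exists v; rewrite !inE eqxx vD.
have [u uD evu] := hD v (negbT vD).
by exists u; rewrite /cnbhd /nbhd !inE uD evu orbT.
Qed.

Lemma sum_deg_le (D : {set T}) :
  \sum_(d in D) (deg e d).+1 <= #|D| * (maxdeg e + 1).
Proof.
rewrite -sum1_card big_distrl /=; apply: leq_sum => d _.
by rewrite mul1n addn1 ltnS deg_le.
Qed.

Lemma gamma_dom : exists D, dominating e D /\ #|D| = gamma e.
Proof.
rewrite /gamma; case: arg_minnP => [|D hD _].
  by apply/forallP => v; rewrite inE.
exists D; split => //.
move=> v vD; move/forallP: hD => /(_ v) /implyP /(_ vD) /existsP [u /andP[uD ev]].
by exists u.
Qed.

Lemma sum_split (D : {set T}) : dominating e D ->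
  \sum_v #|cnbhd e v :&: D| = \sum_v (#|cnbhd e v :&: D| - 1) + #|T|.
Proof.
move=> hD; rewrite -sum1_card -big_split /=; apply: eq_bigr => v _.
by rewrite subnK // dom_ge1.
Qed.

Lemma sum_ge (F : T -> nat) v : F v <= \sum_u F u.
Proof. by rewrite (bigD1 v) //= leq_addr. Qed.

Lemma sum_ge2 (F : T -> nat) y w : w != y -> F y + F w <= \sum_u F u.
Proof.
move=> wy; rewrite (bigD1 y) //= (bigD1 w) /=; last by rewrite wy.
by rewrite addnA leq_addr.
Qed.

Lemma not_eds_pos (D : {set T}) : dominating e D -> ~ eds e D ->
  0 < \sum_v (#|cnbhd e v :&: D| - 1).
Proof.
move=> hD hne; case: (posnP (\sum_v (#|cnbhd e v :&: D| - 1))) => // H0.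
exfalso; apply: hne => v.
have := sum_ge (fun u => #|cnbhd e u :&: D| - 1) v; rewrite H0 leqn0 subn_eq0.
have := dom_ge1 v hD; lia.
Qed.

Lemma key (D : {set T}) : ~ (exists D, eds e D) -> dominating e D ->
  #|T| = #|D| * (maxdeg e + 1) - 1 ->
  (forall d, d \in D -> deg e d = maxdeg e) /\
  exists y : T,
    [/\ y \notin D, eds_del e y D, #|nbhd e y :&: D| = 2
      & forall z : T, z \notin D -> eds_del e z D -> z = y].
Proof.
move=> hne hD hT.
have hne' : ~ eds e D by move=> h; apply: hne; exists D.
have h1 := not_eds_pos hD hne'.
have h2 := dc D; rewrite sum_split // in h2.
have h3 := sum_deg_le D.
set g := \sum_v _ in h1 h2.
have g1 : g = 1 by lia.
have hs : \sum_(d in D) (deg e d).+1 = #|D| * (maxdeg e + 1) by lia.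
split.
  move=> d dD; apply/eqP; rewrite eqn_leq deg_le /=; apply/negP => /negP.
  rewrite -ltnNge => hlt; move: hs.
  rewrite -sum1_card big_distrl /= (bigD1 d) //= [X in _ = X](bigD1 d) //=.
  have : \sum_(i in D | i != d) (deg e i).+1 <= \sum_(i in D | i != d) 1 * (maxdeg e + 1).
    by apply: leq_sum => i _; rewrite mul1n addn1 ltnS deg_le.
  lia.
have [y hy]: exists y, 0 < #|cnbhd e y :&: D| - 1.
  case: (pickP (fun v => 0 < #|cnbhd e v :&: D| - 1)) => [y hy | h0].
    by exists y.
  exfalso; move: g1; rewrite /g big1 // => v _; have := h0 v; simpl; lia.
have fy : #|cnbhd e y :&: D| = 2.
  have := sum_ge (fun u => #|cnbhd e u :&: D| - 1) y; rewrite -/g g1 /=; lia.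
have fw : forall w, w != y -> #|cnbhd e w :&: D| = 1.
  move=> w wy; have := sum_ge2 (fun u => #|cnbhd e u :&: D| - 1) wy.
  rewrite -/g g1 /=; have := dom_ge1 w hD; lia.
have yD : y \notin D.
  apply/negP => yD.
  have : 0 < #|cnbhd e y :&: D :\ y|.
    move: fy; rewrite (cardsD1 y) !inE eqxx yD /=; lia.
  move/card_gt0P => [d]; rewrite !inE => /and3P [dy /orP hdy dD].
  have dy' : d != y by [].
  have := fw d dy'.
  have : #|[set d; y]| <= #|cnbhd e d :&: D|.
    apply: subset_leq_card; apply/subsetP => x; rewrite !inE => /orP [] /eqP ->.
      by rewrite eqxx dD.
    case: hdy => [/eqP ->|hyd]; first by rewrite eqxx yD.
    by rewrite e_sym hyd orbT yD.
  rewrite cards2 dy'; lia.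
have eqD : forall u, u != y -> (cnbhd e u :\ y) :&: D = cnbhd e u :&: D.
  move=> u _; apply/setP => x; rewrite !inE.
  by case: (eqVneq x y) => [->|]; rewrite ?(negbTE yD) ?andbF.
exists y; split => //.
- by split => // u uy; rewrite eqD // fw.
- rewrite -fy; apply: eq_card => x; rewrite /cnbhd /nbhd !inE.
  by case: (eqVneq x y) => [->|]; rewrite ?(negbTE yD) ?andbF.
- move=> z zD [_ hz]; apply/eqP; apply/negPn/negP => zy.
  have := hz y; rewrite eq_sym zy => /(_ isT).
  have -> : (cnbhd e y :\ z) :&: D = cnbhd e y :&: D.
    apply/setP => x; rewrite !inE.
    by case: (eqVneq x z) => [->|]; rewrite ?(negbTE zD) ?andbF.
  by rewrite fy.
Qed.

End S.

Theorem corollary3p10 (T : finType) (e : rel T)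
  (e_sym : symmetric e) (e_irr : irreflexive e) :
  hypo_efficient e ->
  #|T| <= gamma e * (maxdeg e + 1) - 1 /\
  (#|T| = gamma e * (maxdeg e + 1) - 1 ->
     (forall D : {set T}, gamma_set e D ->
        exists y : T,
          [/\ y \notin D, eds_del e y D, #|nbhd e y :&: D| = 2
            & forall z : T, z \notin D -> eds_del e z D -> z = y])
     /\ (forall v : T, (exists2 D : {set T}, gamma_set e D & v \in D) ->
            deg e v = maxdeg e)
     /\ ((forall v : T, exists2 D : {set T}, gamma_set e D & v \in D) ->
            regular e)) /\
  ((exists (D : {set T}) (y : T),
      [/\ gamma_set e D, y \notin D, eds_del e y D, #|nbhd e y :&: D| = 2
        & forall v : T, v \in D -> deg e v = maxdeg e]) ->
   #|T| = gamma e * (maxdeg e + 1) - 1).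
Proof.
move=> [hne _].
have [D0 [hD0 cD0]] := gamma_dom e.
have bound : #|T| <= gamma e * (maxdeg e + 1) - 1.
  have hne' : ~ eds e D0 by move=> h; apply: hne; exists D0.
  have h1 := not_eds_pos hD0 hne'.
  have h2 := dc e_sym e_irr D0; rewrite sum_split // in h2.
  have h3 := sum_deg_le e D0.
  rewrite cD0 in h3; lia.
split => //; split.
  move=> hT; split.
    move=> D [hD cD]; rewrite -cD in hT.
    by have [_ ?] := key e_sym e_irr hne hD hT.
  have hdeg : forall v : T, (exists2 D : {set T}, gamma_set e D & v \in D) ->
            deg e v = maxdeg e.
    move=> v [D [hD cD] vD]; rewrite -cD in hT.
    by have [hd _] := key e_sym e_irr hne hD hT; apply: hd.
  split => // hall u v; by rewrite !hdeg.
move=> [D [y [[hD cD] yD [_ hy] ny hdeg]]].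
have h2 := dc e_sym e_irr D; rewrite sum_split // in h2.
have hs : \sum_(d in D) (deg e d).+1 = #|D| * (maxdeg e + 1).
  rewrite -sum1_card big_distrl /=; apply: eq_bigr => d dD.
  by rewrite hdeg // mul1n addn1.
have fy : #|cnbhd e y :&: D| = 2.
  rewrite -ny; apply: eq_card => x; rewrite /cnbhd /nbhd !inE.
  by case: (eqVneq x y) => [->|]; rewrite ?(negbTE yD) ?andbF.
have fw : forall w, w != y -> #|cnbhd e w :&: D| = 1.
  move=> w wy; rewrite -(hy w wy); apply: eq_card => x; rewrite !inE.
  by case: (eqVneq x y) => [->|]; rewrite ?(negbTE yD) ?andbF.
have g1 : \sum_v (#|cnbhd e v :&: D| - 1) = 1.
  rewrite (bigD1 y) //= fy big1 // => w wy; by rewrite fw.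
rewrite -cD; lia.
Qed.
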